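(* Let $S$ be a probability law on $\{1,2,\dots\}$ and write $\hat S(\lambda)=\sum_{j\ge1}S(j)e^{ij\lambda}=\rho(\lambda)e^{i\tau(\lambda)}$ with $\rho(\lambda)=|\hat S(\lambda)|$. Then for all $r\in[0,1)$ and $\theta\in(-\pi,\pi)$, $$\frac14\int_{-\pi}^{\pi}\left(\frac1\pi+P_{r\rho(\lambda)}(\tau(\lambda)-\theta)+P_{r\rho(\lambda)}(\tau(\lambda)+\theta)\right)d\lambda=1.$$
   Context: $P_s(t)$ denotes the Poisson kernel $P_s(t)=\frac{1}{2\pi}\,\frac{1-s^2}{1-2s\cos t+s^2}$ for $s\in[0,1)$. *)

(* Defs.v *)
From Stdlib Require Import Reals.
From Coquelicot Require Import Coquelicot.
Open Scope R_scope.

Definition poisson (s t : R) : R :=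
  / (2 * PI) * ((1 - s ^ 2) / (1 - 2 * s * cos t + s ^ 2)).

Definition prob_law_pos (S : nat -> R) : Prop :=
  S 0%nat = 0 /\ (forall j, 0 <= S j) /\ is_series S 1.

Definition hatS (S : nat -> R) (l : R) : C :=
  (Series (fun j => S j * cos (INR j * l)), Series (fun j => S j * sin (INR j * l))).

(* Main.v *)
Require Import Defs.
From Stdlib Require Import Reals Lra Lia.
From Coquelicot Require Import Coquelicot.
Open Scope R_scope.

Lemma ser_lim S : prob_law_pos S -> is_lim_seq (sum_n S) 1.
Proof. intros [_ [_ H]]. exact H. Qed.

Lemma ser_ex S c : prob_law_pos S -> (forall j, Rabs (c j) <= 1) ->
  ex_series (fun j => S j * c j).
Proof.
  intros [H0 [Hp H]] Hc.
  apply (@ex_series_le R_AbsRing R_CompleteNormedModule _ S).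
  - intro n. change (norm (S n * c n)) with (Rabs (S n * c n)).
    rewrite Rabs_mult, Rabs_pos_eq by auto.
    specialize (Hc n); specialize (Hp n). nra.
  - exists 1. exact H.
Qed.

Lemma partial_le S c : prob_law_pos S -> (forall j, Rabs (c j) <= 1) ->
  forall N p, Rabs (sum_n (fun j => S j * c j) (N+p) - sum_n (fun j => S j * c j) N)
     <= sum_n S (N+p) - sum_n S N.
Proof.
  intros [H0 [Hp H]] Hc N p. induction p.
  - rewrite Nat.add_0_r. replace (_ - _) with 0 by ring. rewrite Rabs_R0. lra.
  - rewrite Nat.add_succ_r, !sum_Sn. unfold plus; simpl.
    replace (sum_n (fun j : nat => S j * c j) (N + p) + S (Datatypes.S (N + p)) * c (Datatypes.S (N + p)) -
     sum_n (fun j : nat => S j * c j) N) with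
     ((sum_n (fun j : nat => S j * c j) (N + p) - sum_n (fun j : nat => S j * c j) N)
      + S (Datatypes.S (N + p)) * c (Datatypes.S (N + p))) by ring.
    eapply Rle_trans. apply Rabs_triang.
    rewrite Rabs_mult, (Rabs_pos_eq (S _)) by auto.
    specialize (Hc (Datatypes.S (N+p))); specialize (Hp (Datatypes.S (N+p))). nra.
Qed.

Lemma tail S c : prob_law_pos S -> (forall j, Rabs (c j) <= 1) ->
  forall N, Rabs (Series (fun j => S j * c j) - sum_n (fun j => S j * c j) N) <= 1 - sum_n S N.
Proof.
  intros HS Hc N.
  pose proof (Series_correct _ (ser_ex S c HS Hc)) as Hser.
  assert (L1 : is_lim_seq (fun M => Rabs (sum_n (fun j => S j * c j) M - sum_n (fun j => S j * c j) N))
     (Rbar_abs (Series (fun j => S j * c j) - sum_n (fun j => S j * c j) N))).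
  { apply is_lim_seq_abs. apply is_lim_seq_minus'. exact Hser. apply is_lim_seq_const. }
  assert (L2 : is_lim_seq (fun M => sum_n S M - sum_n S N) (1 - sum_n S N)).
  { apply is_lim_seq_minus'. apply ser_lim; auto. apply is_lim_seq_const. }
  assert (Ev : eventually (fun M => Rabs (sum_n (fun j => S j * c j) M - sum_n (fun j => S j * c j) N)
     <= sum_n S M - sum_n S N)).
  { exists N. intros M HM. replace M with (N + (M - N))%nat by lia. apply partial_le; auto. }
  pose proof (is_lim_seq_le_loc _ _ _ _ Ev L1 L2) as K.
  simpl in K. exact K.
Qed.

Lemma e_lim S : prob_law_pos S -> is_lim_seq (fun N => 1 - sum_n S N) 0.
Proof.
  intros HS. replace 0 with (1 - 1) by ring. apply is_lim_seq_minus'.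
  apply is_lim_seq_const. apply ser_lim; auto.
Qed.

Lemma partial_le1 S : prob_law_pos S -> forall N, sum_n S N <= 1.
Proof.
  intros HS N.
  assert (Ev : eventually (fun M => sum_n S N <= sum_n S M)).
  { exists N. intros M HM. replace M with (N + (M - N))%nat by lia.
    destruct HS as [_ [Hp _]].
    clear HM. induction (M-N)%nat. rewrite Nat.add_0_r; lra.
    rewrite Nat.add_succ_r, sum_Sn. unfold plus; simpl. specialize (Hp (Datatypes.S (N+n))). lra. }
  pose proof (is_lim_seq_le_loc _ _ _ _ Ev (is_lim_seq_const (sum_n S N)) (ser_lim S HS)) as K.
  exact K.
Qed.

Ltac rring := match goal with |- ?a = ?b => change (@eq R a b) end; ring.

Definition cis (t : R) : C := (cos t, sin t).

Lemma abs_cos t : Rabs (cos t) <= 1.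
Proof. apply Rabs_le. pose proof (COS_bound t). lra. Qed.
Lemma abs_sin t : Rabs (sin t) <= 1.
Proof. apply Rabs_le. pose proof (SIN_bound t). lra. Qed.

Lemma Cmod_cis t : Cmod (cis t) = 1.
Proof.
  unfold Cmod, cis; simpl.
  replace (cos t * (cos t * 1) + sin t * (sin t * 1)) with 1.
  apply sqrt_1. pose proof (sin2_cos2 t). unfold Rsqr in H. lra.
Qed.

Lemma cis_add a b : cis (a + b) = (cis a * cis b)%C.
Proof. unfold cis, Cmult; simpl. rewrite cos_plus, sin_plus. f_equal; ring. Qed.

Definition aN S N x := sum_n (fun j => S j * cos (INR j * x)) N.
Definition bN S N x := sum_n (fun j => S j * sin (INR j * x)) N.

Lemma Cmod_partial S : prob_law_pos S -> forall N x, Cmod (aN S N x, bN S N x) <= sum_n S N.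
Proof.
  intros [H0 [Hp _]].
  assert (T : forall j x, Cmod (S j * cos (INR j * x), S j * sin (INR j * x)) = S j).
  { intros j x. replace (S j * cos (INR j * x), S j * sin (INR j * x)) with (RtoC (S j) * cis (INR j * x))%C.
    rewrite Cmod_mult, Cmod_R, Cmod_cis, Rabs_pos_eq by auto. ring.
    unfold RtoC, cis, Cmult; simpl. f_equal; ring. }
  intros N x. induction N.
  - unfold aN, bN. rewrite !sum_O, T. lra.
  - unfold aN, bN in *. rewrite !sum_Sn. unfold plus; simpl.
    set (a := sum_n (fun j : nat => S j * cos (INR j * x)) N) in *.
    set (b := sum_n (fun j : nat => S j * sin (INR j * x)) N) in *.
    set (c := S (Datatypes.S N) * cos (INR (Datatypes.S N) * x)).
    set (d := S (Datatypes.S N) * sin (INR (Datatypes.S N) * x)).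
    change (Cmod (Cplus (a,b) (c,d)) <= sum_n S N + S (Datatypes.S N)).
    eapply Rle_trans. apply Cmod_triangle. unfold c, d. rewrite T. lra.
Qed.

Lemma hatS_fst S x : fst (hatS S x) = Series (fun j => S j * cos (INR j * x)).
Proof. reflexivity. Qed.
Lemma hatS_snd S x : snd (hatS S x) = Series (fun j => S j * sin (INR j * x)).
Proof. reflexivity. Qed.

Lemma tail_a S : prob_law_pos S -> forall N x, Rabs (fst (hatS S x) - aN S N x) <= 1 - sum_n S N.
Proof. intros HS N x. apply (tail S (fun j => cos (INR j * x)) HS (fun j => abs_cos _)). Qed.
Lemma tail_b S : prob_law_pos S -> forall N x, Rabs (snd (hatS S x) - bN S N x) <= 1 - sum_n S N.
Proof. intros HS N x. apply (tail S (fun j => sin (INR j * x)) HS (fun j => abs_sin _)). Qed.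

Lemma Cmod_hatS S : prob_law_pos S -> forall x, Cmod (hatS S x) <= 1.
Proof.
  intros HS x.
  assert (La : is_lim_seq (fun N => aN S N x) (fst (hatS S x))).
  { apply (Series_correct _ (ser_ex S (fun j => cos (INR j * x)) HS (fun j => abs_cos _))). }
  assert (Lb : is_lim_seq (fun N => bN S N x) (snd (hatS S x))).
  { apply (Series_correct _ (ser_ex S (fun j => sin (INR j * x)) HS (fun j => abs_sin _))). }
  assert (L : is_lim_seq (fun N => aN S N x * aN S N x + bN S N x * bN S N x)
      (fst (hatS S x) * fst (hatS S x) + snd (hatS S x) * snd (hatS S x))).
  { apply is_lim_seq_plus'; apply is_lim_seq_mult'; auto. }
  assert (B : forall N, aN S N x * aN S N x + bN S N x * bN S N x <= 1).
  { intro N. pose proof (Cmod_partial S HS N x). pose proof (partial_le1 S HS N).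
    pose proof (Cmod_ge_0 (aN S N x, bN S N x)).
    pose proof (Cmod2_alt (aN S N x, bN S N x)) as E. unfold Re, Im in E; cbn [fst snd] in E. set (Cm := Cmod (aN S N x, bN S N x)) in *. assert (Cm <= 1) by lra. nra. }
  pose proof (is_lim_seq_le _ _ _ _ B L (is_lim_seq_const 1)) as K. simpl in K.
  unfold Cmod. rewrite <- sqrt_1. apply sqrt_le_1_alt. simpl. lra.
Qed.

Lemma unif0 (fN : nat -> R -> R) (f : R -> R) (e : nat -> R) a b :
  (forall N, is_RInt (fN N) a b 0) -> is_lim_seq e 0 ->
  (forall N x, Rabs (f x - fN N x) <= e N) -> is_RInt f a b 0.
Proof.
  intros HI He Hb.
  destruct (filterlim_RInt fN a b eventually _ (f : fct_UniformSpace R R_UniformSpace) (fun _ => 0) HI) as [If [H1 H2]].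
  - intros P [eps HP].
    destruct (He (fun y => Rabs y < eps)) as [N0 HN0].
    { exists eps. intros y Hy. unfold ball in Hy; simpl in Hy; unfold AbsRing_ball, minus, plus, opp in Hy; simpl in Hy.
      replace y with (y + - 0) by ring. exact Hy. }
    exists N0. intros n Hn. apply HP. intro t.
    unfold ball; simpl; unfold AbsRing_ball, minus, plus, opp; simpl.
    specialize (HN0 n Hn). simpl in HN0.
    specialize (Hb n t).
    rewrite <- Rabs_Ropp. replace (- (fN n t + - f t)) with (f t - fN n t) by ring.
    pose proof (Rle_abs (e n)). lra.
  - assert (If = 0).
    { assert (H3 : is_lim_seq (fun _ : nat => 0) If) by exact H1. apply is_lim_seq_unique in H3. rewrite Lim_seq_const in H3. injection H3; auto. }
    subst. exact H2.
Qed.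

Lemma lin0 f g c d a b : is_RInt f a b 0 -> is_RInt g a b 0 ->
  is_RInt (fun x => c * f x + d * g x) a b 0.
Proof.
  intros Hf Hg.
  replace 0 with (plus (scal c 0) (scal d 0)).
  apply (@is_RInt_plus R_NormedModule (fun x => scal c (f x)) (fun x => scal d (g x))); apply (@is_RInt_scal R_NormedModule); auto.
  unfold plus, scal; simpl; unfold mult; simpl. ring.
Qed.

Lemma is_RInt_zero a b : is_RInt (fun _ => 0) a b 0.
Proof.
  pose proof (@is_RInt_const R_NormedModule a b 0) as H.
  assert (E : (b - a) * 0 = 0) by ring.
  unfold scal in H; simpl in H; unfold mult in H; simpl in H. rewrite E in H. exact H.
Qed.

Lemma gen_step S (HS : prob_law_pos S) (u v : R -> R) :
  (forall x, Rabs (u x) <= 1) -> (forall x, Rabs (v x) <= 1) ->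
  (forall j, is_RInt (fun x => S j * (cos (INR j * x) * u x - sin (INR j * x) * v x)) (-PI) PI 0) ->
  is_RInt (fun x => fst (hatS S x) * u x - snd (hatS S x) * v x) (-PI) PI 0.
Proof.
  intros Hu Hv Hj.
  apply (unif0 (fun N x => aN S N x * u x - bN S N x * v x) _ (fun N => 2 * (1 - sum_n S N))).
  - intro N. induction N.
    + eapply is_RInt_ext; [| apply (Hj 0%nat)]. intros x _. unfold aN, bN. rewrite !sum_O. rring.
    + eapply is_RInt_ext; [| apply (lin0 _ _ 1 1 _ _ IHN (Hj (Datatypes.S N)))].
      intros x _. unfold aN, bN. rewrite !sum_Sn. unfold plus; simpl. ring.
  - replace (Finite 0) with (Rbar_mult 2 0) by (simpl; f_equal; ring).
    apply is_lim_seq_scal_l. apply e_lim; auto.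
  - intros N x.
    pose proof (tail_a S HS N x). pose proof (tail_b S HS N x).
    replace (fst (hatS S x) * u x - snd (hatS S x) * v x - (aN S N x * u x - bN S N x * v x))
      with ((fst (hatS S x) - aN S N x) * u x - (snd (hatS S x) - bN S N x) * v x) by ring.
    eapply Rle_trans. apply Rabs_triang. rewrite Rabs_Ropp, !Rabs_mult.
    specialize (Hu x); specialize (Hv x).
    pose proof (Rabs_pos (fst (hatS S x) - aN S N x)). pose proof (Rabs_pos (snd (hatS S x) - bN S N x)).
    pose proof (Rabs_pos (u x)). pose proof (Rabs_pos (v x)). nra.
Qed.

Definition Wp (h : R -> C) := forall k : nat,
  is_RInt (fun x => Re (h x * cis (INR (Datatypes.S k) * x))%C) (-PI) PI 0 /\
  is_RInt (fun x => Im (h x * cis (INR (Datatypes.S k) * x))%C) (-PI) PI 0.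
Definition Zp (h : R -> C) := forall k : nat,
  is_RInt (fun x => Re (h x * cis (INR k * x))%C) (-PI) PI 0 /\
  is_RInt (fun x => Im (h x * cis (INR k * x))%C) (-PI) PI 0.

Lemma Zp_Wp h : Zp h -> Wp h.
Proof. intros H k. apply H. Qed.

Lemma Re_mul_cis p t : Re (p * cis t)%C = Re p * cos t - Im p * sin t.
Proof. unfold Re, Im, cis, Cmult; simpl. ring. Qed.
Lemma Im_mul_cis p t : Im (p * cis t)%C = Im p * cos t + Re p * sin t.
Proof. unfold Re, Im, cis, Cmult; simpl. ring. Qed.

Lemma prod_step S (HS : prob_law_pos S) h :
  (forall x, Cmod (h x) <= 1) -> Wp h -> Zp (fun x => hatS S x * h x)%C.
Proof.
  intros Hb HW k.
  set (p := fun x => (h x * cis (INR k * x))%C).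
  assert (Hp : forall x, Cmod (p x) <= 1).
  { intro x. unfold p. rewrite Cmod_mult, Cmod_cis. rewrite Rmult_1_r. auto. }
  assert (Hre : forall x, Rabs (Re (p x)) <= 1).
  { intro x. eapply Rle_trans. apply re_le_Cmod. auto. }
  assert (Him : forall x, Rabs (Im (p x)) <= 1).
  { intro x. eapply Rle_trans. 2: apply (Hp x). eapply Rle_trans. 2: apply Rmax_Cmod. apply Rmax_r. }
  assert (Key : forall j x, (h x * cis (INR (Datatypes.S j + k) * x))%C = (p x * cis (INR (Datatypes.S j) * x))%C).
  { intros j x. unfold p. rewrite <- Cmult_assoc, <- cis_add. f_equal. f_equal.
    rewrite plus_INR. ring. }
  destruct HS as [H0 [Hpos Hser]].
  split.
  - eapply is_RInt_ext; [| apply (gen_step S (conj H0 (conj Hpos Hser)) (fun x => Re (p x)) (fun x => Im (p x)) Hre Him)].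
    + intros x _. cbv beta. rewrite <- Cmult_assoc. change (h x * cis (INR k * x))%C with (p x). unfold Re, Im, Cmult. cbn [fst snd]. rring.
    + intro j. destruct j as [|j].
      * eapply is_RInt_ext; [| apply is_RInt_zero]. intros x _. cbv beta. rewrite H0. rring.
      * destruct (HW (j + k)%nat) as [W1 _].
        replace 0 with (scal (S (Datatypes.S j)) 0) by (unfold scal; simpl; unfold mult; simpl; ring).
        eapply is_RInt_ext; [| apply (@is_RInt_scal R_NormedModule _ _ _ _ _ W1)].
        intros x _. cbv beta. change (scal (S (Datatypes.S j)) ?b) with (S (Datatypes.S j) * b).
        change (Datatypes.S (j + k)) with (Datatypes.S j + k)%nat. rewrite Key, Re_mul_cis. rring.
  - eapply is_RInt_ext; [| apply (gen_step S (conj H0 (conj Hpos Hser)) (fun x => Im (p x)) (fun x => - Re (p x)) Him)].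
    + intros x _. cbv beta. rewrite <- Cmult_assoc. change (h x * cis (INR k * x))%C with (p x). unfold Re, Im, Cmult. cbn [fst snd]. rring.
    + intro x. rewrite Rabs_Ropp. auto.
    + intro j. destruct j as [|j].
      * eapply is_RInt_ext; [| apply is_RInt_zero]. intros x _. cbv beta. rewrite H0. rring.
      * destruct (HW (j + k)%nat) as [_ W1].
        replace 0 with (scal (S (Datatypes.S j)) 0) by (unfold scal; simpl; unfold mult; simpl; ring).
        eapply is_RInt_ext; [| apply (@is_RInt_scal R_NormedModule _ _ _ _ _ W1)].
        intros x _. cbv beta. change (scal (S (Datatypes.S j)) ?b) with (S (Datatypes.S j) * b).
        change (Datatypes.S (j + k)) with (Datatypes.S j + k)%nat. rewrite Key, Im_mul_cis. rring.
Qed.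

Lemma sin_mPI k : sin (INR k * PI) = 0.
Proof. apply sin_eq_0_1. exists (Z.of_nat k). rewrite INR_IZR_INZ. reflexivity. Qed.

Lemma W_one : Wp (fun _ => 1%C).
Proof.
  intro k. set (m := INR (Datatypes.S k)).
  assert (Hm : 0 < m) by (unfold m; apply lt_0_INR; lia).
  split.
  - eapply is_RInt_ext with (f := fun x => cos (m * x)).
    { intros x _. rewrite Cmult_1_l. reflexivity. }
    assert (E : 0 = minus (sin (m * PI) / m) (sin (m * - PI) / m)).
    { unfold minus, plus, opp; simpl. replace (m * - PI) with (- (m * PI)) by ring.
      rewrite sin_neg. assert (Z0 : sin (m * PI) = 0) by (unfold m; apply sin_mPI). rewrite Z0. field. lra. }
    rewrite E. apply (is_RInt_derive (fun x => sin (m * x) / m)).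
    + intros x _. auto_derive; auto. field. lra.
    + intros x _. apply (@ex_derive_continuous R_AbsRing R_NormedModule). auto_derive. auto.
  - eapply is_RInt_ext with (f := fun x => sin (m * x)).
    { intros x _. rewrite Cmult_1_l. reflexivity. }
    assert (E : 0 = minus (- cos (m * PI) / m) (- cos (m * - PI) / m)).
    { unfold minus, plus, opp; simpl. replace (m * - PI) with (- (m * PI)) by ring.
      rewrite cos_neg. field. lra. }
    rewrite E. apply (is_RInt_derive (fun x => - cos (m * x) / m)).
    + intros x _. auto_derive; auto. field. lra.
    + intros x _. apply (@ex_derive_continuous R_AbsRing R_NormedModule). auto_derive. auto.
Qed.

Lemma pow_le1 x n : 0 <= x <= 1 -> x ^ n <= 1.
Proof. intros H. induction n; simpl. lra. pose proof (pow_le x n (proj1 H)). nra. Qed.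

Lemma Cmod_Spow S (HS : prob_law_pos S) n x : Cmod (Cpow (hatS S x) n) <= 1.
Proof. rewrite Cmod_pow. apply pow_le1. split. apply Cmod_ge_0. apply Cmod_hatS; auto. Qed.

Lemma W_pow S (HS : prob_law_pos S) n : Wp (fun x => Cpow (hatS S x) n).
Proof.
  induction n.
  - apply W_one.
  - apply Zp_Wp. apply (prod_step S HS (fun x => Cpow (hatS S x) n)); auto.
    intro; apply Cmod_Spow; auto.
Qed.

Lemma Z_pow S (HS : prob_law_pos S) n : Zp (fun x => Cpow (hatS S x) (Datatypes.S n)).
Proof.
  apply (prod_step S HS (fun x => Cpow (hatS S x) n)). intro; apply Cmod_Spow; auto. apply W_pow; auto.
Qed.

Lemma int_pow S (HS : prob_law_pos S) n :
  is_RInt (fun x => Re (Cpow (hatS S x) (Datatypes.S n))) (-PI) PI 0 /\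
  is_RInt (fun x => Im (Cpow (hatS S x) (Datatypes.S n))) (-PI) PI 0.
Proof.
  destruct (Z_pow S HS n 0%nat) as [A B]. split.
  - eapply is_RInt_ext; [| apply A]. intros x _. cbv beta. rewrite Re_mul_cis.
    replace (INR 0 * x) with 0 by (simpl; ring). rewrite cos_0, sin_0. rring.
  - eapply is_RInt_ext; [| apply B]. intros x _. cbv beta. rewrite Im_mul_cis.
    replace (INR 0 * x) with 0 by (simpl; ring). rewrite cos_0, sin_0. rring.
Qed.

Fixpoint gs (z : C) (N : nat) : C :=
  match N with 0%nat => 0%C | Datatypes.S N => (gs z N + Cpow z (Datatypes.S N))%C end.

Lemma gs_id z N : (gs z N * (1 - z))%C = (z - Cpow z (Datatypes.S N))%C.
Proof.
  induction N.
  - simpl. ring.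
  - simpl gs. rewrite Cmult_plus_distr_r, IHN. simpl. ring.
Qed.

Lemma Cmod_1m z : 1 - Cmod z <= Cmod (1 - z)%C.
Proof.
  pose proof (Cmod_triangle (1 - z)%C z). replace (1 - z + z)%C with (RtoC 1) in H by ring.
  rewrite Cmod_1 in H. lra.
Qed.

Lemma geom_bound z r N : Cmod z <= r -> r < 1 ->
  Rabs (Re (z / (1 - z))%C - Re (gs z N)) <= r ^ (Datatypes.S N) / (1 - r).
Proof.
  intros Hz Hr.
  assert (Hnz : (1 - z)%C <> 0%C).
  { intro E. pose proof (Cmod_1m z). rewrite E, Cmod_0 in H. lra. }
  assert (E : (z / (1 - z) - gs z N)%C = (Cpow z (Datatypes.S N) / (1 - z))%C).
  { replace (Cpow z (Datatypes.S N)) with (z - gs z N * (1 - z))%C by (rewrite gs_id; ring). field. auto. }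
  replace (Re (z / (1 - z))%C - Re (gs z N)) with (Re (z / (1 - z) - gs z N)%C)
    by (unfold Re, Cminus, Cplus, Copp; simpl; ring).
  rewrite E. eapply Rle_trans. apply re_le_Cmod.
  rewrite Cmod_div by auto. rewrite Cmod_pow.
  pose proof (Cmod_1m z). pose proof (Cmod_ge_0 z).
  unfold Rdiv. apply Rmult_le_compat.
  - apply pow_le. auto.
  - left. apply Rinv_0_lt_compat. lra.
  - apply pow_incr. lra.
  - apply Rinv_le_contravar; lra.
Qed.

Lemma re_add a b : Re (a + b)%C = Re a + Re b.
Proof. reflexivity. Qed.

Lemma re_mul a b : Re (a * b)%C = Re a * Re b - Im a * Im b.
Proof. unfold Re, Im, Cmult; simpl. ring. Qed.

Lemma int_gs S (HS : prob_law_pos S) (w : C) N :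
  is_RInt (fun x => Re (gs (w * hatS S x)%C N)) (-PI) PI 0.
Proof.
  induction N.
  - eapply is_RInt_ext; [| apply is_RInt_zero]. intros x _. simpl. reflexivity.
  - destruct (int_pow S HS N) as [A B].
    pose proof (lin0 _ _ (Re (Cpow w (Datatypes.S N))) (- Im (Cpow w (Datatypes.S N))) _ _ A B) as C1.
    eapply is_RInt_ext; [| apply (lin0 _ _ 1 1 _ _ IHN C1)].
    intros x _. cbv beta. change (gs (w * hatS S x)%C (Datatypes.S N)) with
      (gs (w * hatS S x)%C N + Cpow (w * hatS S x)%C (Datatypes.S N))%C.
    rewrite Cpow_mult_l, re_add, re_mul. unfold Re, Im. rring.
Qed.

Lemma re_frac s t : 0 <= s < 1 ->
  Re (Cdiv ((s * cos t)%R, (s * sin t)%R) (Cminus 1 ((s * cos t)%R, (s * sin t)%R))) =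
  (s * cos t - s ^ 2) / (1 - 2 * s * cos t + s ^ 2).
Proof.
  intros Hs.
  pose proof (sin2_cos2 t) as E. unfold Rsqr in E.
  pose proof (COS_bound t).
  assert (D : 0 < 1 - 2 * s * cos t + s ^ 2) by nra.
  unfold Cdiv, Cinv, Cmult, Cminus, Cplus, Copp, Re, Im, RtoC; cbn [fst snd].
  replace ((1 + - (s * cos t)) ^ 2 + (0 + - (s * sin t)) ^ 2) with (1 - 2 * s * cos t + s ^ 2) by nra.
  match goal with |- ?a = ?b => change (@eq R a b) end.
  replace (s * cos t - s ^ 2) with (s * cos t * (1 - s * cos t) - s * sin t * (s * sin t)) by nra.
  field. lra.
Qed.

Lemma int_main S (HS : prob_law_pos S) (w : C) r : 0 <= r < 1 -> Cmod w <= r ->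
  is_RInt (fun x => Re ((w * hatS S x) / (1 - w * hatS S x))%C) (-PI) PI 0.
Proof.
  intros Hr Hw.
  apply (unif0 (fun N x => Re (gs (w * hatS S x)%C N)) _ (fun N => (r / (1 - r)) * r ^ N)).
  - intro N. apply int_gs; auto.
  - replace (Finite 0) with (Rbar_mult (r / (1 - r)) 0) by (simpl; f_equal; ring).
    apply is_lim_seq_scal_l. apply is_lim_seq_geom. rewrite Rabs_pos_eq; lra.
  - intros N x.
    replace (r / (1 - r) * r ^ N) with (r ^ Datatypes.S N / (1 - r)) by (simpl; field; lra).
    apply geom_bound; [| lra].
    rewrite Cmod_mult. pose proof (Cmod_hatS S HS x). pose proof (Cmod_ge_0 w). pose proof (Cmod_ge_0 (hatS S x)). nra.
Qed.

Lemma RInt_val (f : R -> R) a b (l l' : R) : is_RInt f a b l -> l = l' -> is_RInt f a b l'.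
Proof. intros H E. subst. exact H. Qed.

Lemma pois_int S rho tau : prob_law_pos S ->
  (forall l, rho l = Cmod (hatS S l)) ->
  (forall l, hatS S l = (rho l * cos (tau l), rho l * sin (tau l))) ->
  forall r theta, 0 <= r < 1 ->
  is_RInt (fun l => poisson (r * rho l) (tau l - theta)) (- PI) PI 1.
Proof.
  intros HS Hrho Hh r th Hr.
  set (w := ((r * cos th)%R, (- (r * sin th))%R) : C).
  assert (Hw : Cmod w <= r).
  { unfold Cmod, w; cbn [fst snd].
    replace ((r * cos th) ^ 2 + (- (r * sin th)) ^ 2) with (r ^ 2).
    rewrite sqrt_pow2; lra.
    pose proof (sin2_cos2 th) as E. unfold Rsqr in E. nra. }
  pose proof (int_main S HS w r Hr Hw) as I0.
  assert (I1 : is_RInt (fun x => /(2*PI) * 1 + /PI * Re ((w * hatS S x) / (1 - w * hatS S x))%C) (-PI) PI 1).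
  { pose proof (@is_RInt_const R_NormedModule (-PI) PI 1) as Ic.
    pose proof (@is_RInt_plus R_NormedModule _ _ _ _ _ _
      (@is_RInt_scal R_NormedModule _ _ _ (/(2*PI)) _ Ic)
      (@is_RInt_scal R_NormedModule _ _ _ (/PI) _ I0)) as K.
    apply (RInt_val _ _ _ _ _ K). unfold plus, scal; simpl; unfold mult; simpl. pose proof PI_RGT_0. field. lra. }
  eapply is_RInt_ext; [| exact I1].
  intros x _. cbv beta.
  set (s := r * rho x). set (t := tau x - th).
  assert (G : (w * hatS S x)%C = ((s * cos t)%R, (s * sin t)%R)).
  { rewrite Hh. unfold w, Cmult, s, t; cbn [fst snd]. rewrite cos_minus, sin_minus. f_equal; ring. }
  assert (Hs : 0 <= s < 1).
  { unfold s. rewrite Hrho. pose proof (Cmod_hatS S HS x). pose proof (Cmod_ge_0 (hatS S x)). nra. }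
  rewrite G, re_frac by auto.
  pose proof (COS_bound t).
  assert (D : 0 < 1 - 2 * s * cos t + s ^ 2) by nra.
  pose proof PI_RGT_0.
  unfold poisson. fold s t. match goal with |- ?a = ?b => change (@eq R a b) end. field. lra.
Qed.

Theorem lemma5p2 (S : nat -> R) (rho tau : R -> R) :
  prob_law_pos S ->
  (forall l, rho l = Cmod (hatS S l)) ->
  (forall l, hatS S l = (rho l * cos (tau l), rho l * sin (tau l))) ->
  forall r theta : R, 0 <= r < 1 -> - PI < theta < PI ->
  / 4 * RInt (fun l => / PI + poisson (r * rho l) (tau l - theta)
                            + poisson (r * rho l) (tau l + theta)) (- PI) PI = 1.
Proof.
  intros HS Hrho Hh r th Hr Hth.
  pose proof (pois_int S rho tau HS Hrho Hh r th Hr) as P1.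
  pose proof (pois_int S rho tau HS Hrho Hh r (- th) Hr) as P2.
  pose proof (@is_RInt_const R_NormedModule (-PI) PI (/ PI)) as Ic.
  pose proof (@is_RInt_plus R_NormedModule _ _ _ _ _ _
      (@is_RInt_plus R_NormedModule _ _ _ _ _ _ Ic P1) P2) as K.
  rewrite (is_RInt_unique _ _ _ 4). lra.
  eapply is_RInt_ext; [| apply (RInt_val _ _ _ _ _ K)].
  2: { unfold plus, scal; simpl; unfold mult; simpl. pose proof PI_RGT_0. field. lra. }
  intros x _. cbv beta. replace (tau x - - th) with (tau x + th) by ring. reflexivity.
Qed.
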